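(* In the setting below, for each $n\in\mathbb{N}_0$ and $i,j=1,\dots,N$, $$|x_i(s)-x_j(t)|\le d(t_{2n})\quad\forall s,t\in[t_{2n},t_{2n+1}].$$
   Context: Setting: $N\ge2$; $\psi:\mathbb{R}^d\times\mathbb{R}^d\to\mathbb{R}$ positive, bounded, continuous, $K:=\|\psi\|_\infty$; $\{t_n\}_{n\in\mathbb{N}_0}$ increasing, nonnegative, $t_0=0$, $t_n\to\infty$; $\alpha(0)=1$, $\alpha=1$ on $(t_{2n},t_{2n+1})$, $\alpha=-1$ on $[t_{2n+1},t_{2n+2}]$; $\{x_i\}$ solves $x_i'(t)=\frac1{N-1}\sum_{j\ne i}\alpha(t)\psi(x_i(t),x_j(t))(x_j(t)-x_i(t))$, $t>0$, $x_i(0)=x_i^0\in\mathbb{R}^d$ (continuous, $C^1$ on each $(t_n,t_{n+1})$). $d(t):=\max_{i,j}|x_i(t)-x_j(t)|$. Standing assumptions: $t_{2n+2}-t_{2n+1}<\frac{\ln 2}{K}$ for all $n$; $\sum_{p\ge0}\ln\frac{e^{K(t_{2p+2}-t_{2p+1})}}{2-e^{K(t_{2p+2}-t_{2p+1})}}<\infty$; $\sum_{p\ge0}\ln\max\{1-e^{-K(t_{2p+1}-t_{2p})},1-\frac{\psi_0}{K}(1-e^{-K(t_{2p+1}-t_{2p})})\}=-\infty$, with $\psi_0=\min_{|y|,|z|\le M^0}\psi(y,z)$, $M^0=e^{K\sum_{p}(t_{2p+2}-t_{2p+1})}\max_i|x_i^0|$. *)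

(* Defs.v *)
From HB Require Import structures.
From mathcomp Require Import all_boot all_order all_algebra.
From mathcomp Require Import all_classical all_reals all_analysis.
Set Implicit Arguments. Unset Strict Implicit. Unset Printing Implicit Defensive.
Import Order.TTheory GRing.Theory Num.Theory.
Import numFieldNormedType.Exports.
Local Open Scope classical_set_scope.
Local Open Scope ring_scope.

Definition enorm (R : realType) (d : nat) (v : 'rV[R]_d) : R :=
  Num.sqrt (\sum_(k < d) (v ord0 k) ^+ 2).

(* K := ||psi||_oo (psi is positive, so this is the sup of its values) *)
Definition Ksup (R : realType) (d : nat) (psi : 'rV[R]_d -> 'rV[R]_d -> R) : R :=
  sup [set r | exists y z, r = psi y z].

Definition alpha (R : realType) (t : nat -> R) (s : R) : R :=
  if s == 0 then 1
  else if `[< exists n, t (2 * n + 1)%N <= s <= t (2 * n + 2)%N >] then -1 else 1.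

Definition diam (R : realType) (d N : nat) (x : 'I_N -> R -> 'rV[R]_d) (s : R) : R :=
  \big[Num.max/0]_(i < N) \big[Num.max/0]_(j < N) enorm (x i s - x j s).

Definition negdur (R : realType) (t : nat -> R) (p : nat) : R :=
  t (2 * p + 2)%N - t (2 * p + 1)%N.
Definition posdur (R : realType) (t : nat -> R) (p : nat) : R :=
  t (2 * p + 1)%N - t (2 * p)%N.

Definition M0 (R : realType) (d N : nat) (K : R) (t : nat -> R)
    (x : 'I_N -> R -> 'rV[R]_d) : R :=
  expR (K * fine (\sum_(0 <= p <oo) (negdur t p)%:E)%E)
  * \big[Num.max/0]_(i < N) enorm (x i 0).

Definition psi0 (R : realType) (d : nat) (psi : 'rV[R]_d -> 'rV[R]_d -> R) (M : R) : R :=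
  inf [set r | exists y z, enorm y <= M /\ enorm z <= M /\ r = psi y z].

Definition rhs (R : realType) (d N : nat) (psi : 'rV[R]_d -> 'rV[R]_d -> R)
    (t : nat -> R) (x : 'I_N -> R -> 'rV[R]_d) (i : 'I_N) (s : R) : 'rV[R]_d :=
  (N.-1%:R)^-1 *: \sum_(j < N | j != i)
      (alpha t s * psi (x i s) (x j s)) *: (x j s - x i s).

(* Main.v *)
Require Import Defs.
From HB Require Import structures.
From mathcomp Require Import all_boot all_order all_algebra.
From mathcomp Require Import all_classical all_reals all_analysis.
From mathcomp Require Import ring lra zify.
Import Order.TTheory GRing.Theory Num.Theory.
Import numFieldNormedType.Exports.
Local Open Scope classical_set_scope.
Local Open Scope ring_scope.

Lemma ed_nbhs {R : realType} (τ : R) (P : R -> Prop) :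
  (exists2 δ : R, 0 < δ & forall r, `|r - τ| < δ -> P r) -> \forall r \near τ, P r.
Proof.
move=> [δ δ0 H]; apply/nbhs_ballP; exists δ => // r /=.
rewrite -ball_normE /= => h; apply: H; by rewrite distrC.
Qed.

Lemma nbhs_ed {R : realType} (τ : R) (P : R -> Prop) :
  (\forall r \near τ, P r) -> exists2 δ : R, 0 < δ & forall r, `|r - τ| < δ -> P r.
Proof.
move=> /nbhs_ballP [δ δ0 H]; exists δ => // r h; apply: H.
by rewrite -ball_normE /= distrC.
Qed.

Lemma within_ed {R : realType} {g : R -> R} {A : set R} {τ l : R} :
  g @ within A (nbhs τ) --> l ->
  forall e : R, 0 < e -> exists2 δ : R, 0 < δ & forall r, A r -> `|r - τ| < δ -> `|g r - l| < e.
Proof.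
move=> /cvgrPdist_lt H e e0; have := H e e0.
rewrite near_withinE => /nbhs_ed [δ δ0 Hb].
exists δ => // r Ar rt; rewrite distrC; exact: Hb.
Qed.

Lemma left_pt {R : realType} {a τ δ : R} : a < τ -> 0 < δ ->
  exists r, a <= r < τ /\ `|r - τ| < δ.
Proof.
move=> aτ δ0; case: (leP a (τ - δ/2)) => h.
  exists (τ - δ/2); rewrite ltr_norml; split; [apply/andP; split|]; lra.
exists a; rewrite ltr_norml; split; [apply/andP; split|]; lra.
Qed.
Section MP.
Variables (R : realType) (I : finType) (y : I -> R -> R) (a b c : R).
Hypothesis ab : a < b.
Hypothesis ycont : forall k τ, a <= τ <= b -> forall e : R, 0 < e ->
  exists2 δ : R, 0 < δ & forall r, a <= r <= b -> `|r - τ| < δ -> `|y k r - y k τ| < e.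
Hypothesis yder : forall k τ, a < τ < b -> (forall j, y j τ <= y k τ) ->
  exists2 D : R, D <= 0 & forall e : R, 0 < e -> exists2 δ : R, 0 < δ &
    forall h : R, h != 0 -> `|h| < δ -> `|h^-1 * (y k (h + τ) - y k τ) - D| < e.
Hypothesis yinit : forall k, y k a <= c.

Section Eps.
Variable eps : R.
Hypothesis eps0 : 0 < eps.
Let z k s := y k s - c - eps * (1 + s - a).

Let zcont k τ : a <= τ <= b -> forall e : R, 0 < e ->
  exists2 δ : R, 0 < δ & forall r, a <= r <= b -> `|r - τ| < δ -> `|z k r - z k τ| < e.
Proof.
move=> hτ e e0.
have e20 : 0 < e / 2 by lra.
have [δ δ0 H] := ycont k τ hτ (e/2) e20.
have ee0 : 0 < e / (2 * eps) by apply: divr_gt0 => //; apply: mulr_gt0.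
exists (Num.min δ (e / (2 * eps))); first by rewrite lt_min δ0 ee0.
move=> r hr; rewrite lt_min => /andP[h1 h2].
have := H r hr h1.
have : eps * `|r - τ| < eps * (e / (2 * eps)) by rewrite ltr_pM2l.
have -> : eps * (e / (2 * eps)) = e / 2 by field; rewrite gt_eqF.
rewrite /z => h3 h4.
have -> : y k r - c - eps * (1 + r - a) - (y k τ - c - eps * (1 + τ - a))
  = (y k r - y k τ) - eps * (r - τ) by ring.
apply: (le_lt_trans (ler_normB _ _)).
rewrite normrM (gtr0_norm eps0); lra.
Qed.

Lemma step1 k s : a <= s < b -> y k s < c + eps * (1 + s - a).
Proof.
move=> hs; apply/negP => /negP; rewrite -leNgt => hz.
have hz0 : 0 <= z k s by rewrite /z; lra.
pose A := [set r | a <= r <= s /\ exists k, 0 <= z k r].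
have As : A s by split => //; [apply/andP; lra | exists k].
have lbA : lbound A a by move=> r [/andP[]].
have hinf : has_inf A by split; [exists s | exists a].
set τ := inf A.
have aτ : a <= τ by apply: lb_le_inf => //; exists s.
have τs : τ <= s by apply: ge_inf => //; exists a.
have before : forall r, a <= r < τ -> forall j, z j r < 0.
  move=> r /andP[ar rτ] j; rewrite ltNge; apply/negP => hj.
  have : A r by split; [apply/andP; lra | exists j].
  move=> /(ge_inf (ex_intro _ a lbA)) => /= hh; lra.
have [k1 hk1] : exists k1, 0 <= z k1 τ.
  apply: contrapT => hn.
  have hneg : forall j, z j τ < 0.
    by move=> j; rewrite ltNge; apply/negP => hj; apply: hn; exists j.
  have Hj : forall j, \forall r \near τ, (a <= r <= b -> z j r < 0).
    move=> j; apply: ed_nbhs.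
    have e0 : 0 < - z j τ by rewrite oppr_gt0.
    have [|δ δ0 H] := zcont j τ _ (- z j τ) e0; first by apply/andP; lra.
    exists δ => // r hr hrb; have := H r hrb hr.
    rewrite ltr_norml => /andP[_]; lra.
  have [δ δ0 H] := @nbhs_ed R τ _ (@filter_forall R I (fun j r => a <= r <= b -> z j r < 0) (nbhs τ) _ Hj).
  have [r Ar rlt] := inf_adherent δ0 hinf.
  have τr : τ <= r by apply: ge_inf => //; exists a.
  case: Ar => /andP[ar rs] [j hj].
  have : z j r < 0.
    apply: H; last by apply/andP; lra.
    by rewrite ger0_norm; lra.
  lra.
have aτ' : a < τ.
  rewrite lt_neqAle aτ andbT; apply/negP => /eqP eaτ.
  move: hk1; rewrite -eaτ /z addrK mulr1; have := yinit k1; have := eps0; lra.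
have zle : forall j, z j τ <= 0.
  move=> j; rewrite leNgt; apply/negP => hj.
  have [|δ δ0 H] := zcont j τ _ (z j τ) hj; first by apply/andP; lra.
  have [r [/andP[ar rτ] hr]] := left_pt aτ' δ0.
  have := H r ltac:(apply/andP; lra) hr.
  have := before r ltac:(apply/andP; lra) j.
  rewrite ltr_norml; lra.
have zk1 : z k1 τ = 0 by apply/eqP; rewrite eq_le hk1 zle.
have ymax : forall j, y j τ <= y k1 τ.
  by move=> j; have := zle j; move: zk1; rewrite /z; lra.
have [|D D0 HD] := yder k1 τ _ ymax; first by apply/andP; lra.
have [δ δ0 H] := HD eps eps0.
have [r [/andP[ar rτ] hr]] := left_pt aτ' δ0.
set h := r - τ.
have hneg : h < 0 by rewrite /h; lra.
have hn0 : h != 0 by rewrite lt_eqF.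
have := H h hn0; rewrite /h subrK => /(_ hr).
rewrite ltr_norml => /andP[_ hq].
have := before r ltac:(apply/andP; lra) k1.
move: zk1; rewrite /z => zk1 zr.
set q := (r - τ)^-1 * (y k1 r - y k1 τ) in hq.
have hqe : q * (r - τ) = y k1 r - y k1 τ.
  by rewrite /q mulrAC mulVf ?mul1r.
move: hqe hq hneg; rewrite /h => hqe hq hneg.
have := eps0; nra.
Qed.
End Eps.

Lemma maxprinciple k s : a <= s <= b -> y k s <= c.
Proof.
have pre : forall k s, a <= s < b -> y k s <= c.
  move=> k' s' hs; apply/ler_addgt0Pr => e e0.
  have p0 : 0 < 1 + s' - a by lra.
  have := @step1 (e / (1 + s' - a)) (divr_gt0 e0 p0) k' s' hs.
  have -> : e / (1 + s' - a) * (1 + s' - a) = e by field; rewrite gt_eqF.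
  lra.
move=> /andP[hsa sb]; case: (ltP s b) => sb'.
  by apply: pre; apply/andP.
have -> : s = b by apply/eqP; rewrite eq_le sb sb'.
rewrite leNgt; apply/negP => hb.
have e0 : 0 < y k b - c by lra.
have [|δ δ0 H] := ycont k b _ (y k b - c) e0; first by apply/andP; lra.
have [r [/andP[ar rb] hr]] := left_pt ab δ0.
have := H r ltac:(apply/andP; lra) hr.
have := pre k r ltac:(apply/andP; lra).
rewrite ltr_norml; lra.
Qed.
End MP.
Definition Lf {R : realType} {d : nat} (w M : 'rV[R]_d) : R :=
  \sum_(c < d) w ord0 c * M ord0 c.

Lemma Lf_cont {R : realType} {d : nat} (w : 'rV[R]_d) : continuous (Lf w).
Proof.
rewrite /Lf.
apply: (@continuous_big R^o 'I_d +%R 0 predT add_continuous _ (index_enum 'I_d)).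
move=> c _ M.
exact: (cvgM (cvg_cst (w ord0 c)) (@coord_continuous R 1 d ord0 c M)).
Qed.

Lemma LfZ {R : realType} {d : nat} (w M : 'rV[R]_d) (r : R) : Lf w (r *: M) = r * Lf w M.
Proof. rewrite /Lf mulr_sumr; apply: eq_bigr => c _; rewrite mxE; ring. Qed.

Lemma LfB {R : realType} {d : nat} (w M P : 'rV[R]_d) : Lf w (M - P) = Lf w M - Lf w P.
Proof. rewrite /Lf -sumrB; apply: eq_bigr => c _; rewrite !mxE; ring. Qed.

Lemma Lf_sum {R : realType} {d : nat} (w : 'rV[R]_d) (I : finType) (P : pred I) (F : I -> 'rV[R]_d) :
  Lf w (\sum_(j | P j) F j) = \sum_(j | P j) Lf w (F j).
Proof.
rewrite /Lf exchange_big /=; apply: eq_bigr => c _.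
by rewrite summxE mulr_sumr.
Qed.

Lemma LfN {R : realType} {d : nat} (w M : 'rV[R]_d) : Lf (- w) M = - Lf w M.
Proof. rewrite /Lf -sumrN; apply: eq_bigr => c _; rewrite !mxE; ring. Qed.

Lemma Lf_self {R : realType} {d : nat} (w : 'rV[R]_d) : Lf w w = enorm w ^+ 2.
Proof.
rewrite /enorm sqr_sqrtr; last by apply: sumr_ge0 => c _; exact: sqr_ge0.
by rewrite /Lf; apply: eq_bigr => c _; rewrite expr2.
Qed.

Lemma Lf_der {R : realType} {d : nat} (w : 'rV[R]_d) (f : R -> 'rV[R]_d) (τ : R) (D : 'rV[R]_d) :
  is_derive τ 1 f D ->
  (fun h => h^-1 * (Lf w (f (h + τ)) - Lf w (f τ))) @ 0^' --> Lf w D.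
Proof.
move=> [df dv].
have H : (fun h : R => h^-1 *: ((f \o shift τ) (h *: 1) - f τ)) @ 0^' --> D.
  by rewrite -dv; exact: df.
have := continuous_cvg _ (Lf_cont w D) H.
have -> : (Lf w \o (fun h : R => h^-1 *: ((f \o shift τ) (h *: 1) - f τ))) =
  (fun h => h^-1 * (Lf w (f (h + τ)) - Lf w (f τ))).
  by apply/funext => h /=; rewrite LfZ LfB /shift /= [h%:A]mulr1.
by move=> HH; exact: HH.
Qed.

Lemma two_ineq {R : realType} {d : nat} (v u : 'rV[R]_d) :
  2 * Lf v u <= enorm v ^+ 2 + enorm u ^+ 2.
Proof.
rewrite -!Lf_self /Lf mulr_sumr -big_split /=; apply: ler_sum => c _.
have := sqr_ge0 (v ord0 c - u ord0 c); rewrite !expr2 => h; nra.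
Qed.

Lemma enorm_ge0 {R : realType} {d : nat} (v : 'rV[R]_d) : 0 <= enorm v.
Proof. exact: sqrtr_ge0. Qed.

Lemma argmax_ex {R : realType} {I : finType} (i0 : I) (F : I -> R) :
  exists p, forall m, F m <= F p.
Proof.
case: (@arg_maxP _ _ I i0 predT F) => // p _ H.
by exists p => m; apply: H.
Qed.

Lemma tle {R : realType} (t : nat -> R) : (forall n, t n < t n.+1) ->
  forall m k, (m <= k)%N -> t m <= t k.
Proof.
move=> tinc m k mk; rewrite -(subnKC mk); elim: (k - m)%N => [|q IH].
  by rewrite addn0.
by rewrite addnS; apply: (le_trans IH); apply/ltW.
Qed.

Theorem lemma3p2 (R : realType) (d N : nat)
  (psi : 'rV[R]_d -> 'rV[R]_d -> R) (t : nat -> R)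
  (x : 'I_N -> R -> 'rV[R]_d) :
  (2 <= N)%N ->
  (* psi positive, bounded, continuous *)
  (forall y z, 0 < psi y z) ->
  (exists B : R, forall y z, psi y z <= B) ->
  continuous (fun p : 'rV[R]_d * 'rV[R]_d => psi p.1 p.2) ->
  (* time sequence *)
  t 0%N = 0 ->
  (forall n, t n < t n.+1) ->
  t n @[n --> \oo] --> +oo ->
  (* x solves the system: continuous on [0,oo), differentiable on each (t_n, t_{n+1}) *)
  (forall i, {within `[0, +oo[, continuous (x i)}) ->
  (forall i n s, t n < s < t n.+1 -> is_derive s 1 (x i) (rhs psi t x i s)) ->
  (* standing assumptions *)
  (forall n, negdur t n < ln 2 / Ksup psi) ->
  (\sum_(0 <= p <oo)
     (ln (expR (Ksup psi * negdur t p) / (2 - expR (Ksup psi * negdur t p))))%:E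
     < +oo)%E ->
  (\sum_(0 <= p <oo)
     (ln (Num.max (1 - expR (- (Ksup psi * posdur t p)))
                  (1 - psi0 psi (M0 (Ksup psi) t x) / Ksup psi
                         * (1 - expR (- (Ksup psi * posdur t p))))))%:E
     = -oo)%E ->
  forall (n : nat) (i j : 'I_N) (s u : R),
    t (2 * n)%N <= s <= t (2 * n + 1)%N ->
    t (2 * n)%N <= u <= t (2 * n + 1)%N ->
    enorm (x i s - x j u) <= diam x (t (2 * n)%N).
Proof.
move=> N2 psipos _ _ t0 tinc _ xcont xder _ _ _ n i j s u hs hu.
have tl := tle t tinc.
set a := t (2 * n)%N; set b := t (2 * n + 1)%N.
have ab : a < b by rewrite /a /b addn1; apply: tinc.
have a0 : 0 <= a by rewrite -t0; apply: tl.
have alpha1 : forall τ, a < τ < b -> alpha t τ = 1.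
  move=> τ /andP[aτ τb]; rewrite /alpha.
  have -> : (τ == 0) = false by apply/negbTE; rewrite gt_eqF //; lra.
  rewrite asboolF // => -[m /andP[h1 h2]].
  case: (ltnP m n) => mn.
    have : t (2 * m + 2)%N <= a by apply: tl; lia.
    lra.
  have : b <= t (2 * m + 1)%N by apply: tl; lia.
  lra.
have key : forall (w : 'rV[R]_d) (p : 'I_N), (forall m, Lf w (x m a) <= Lf w (x p a)) ->
    forall k σ, a <= σ <= b -> Lf w (x k σ) <= Lf w (x p a).
  move=> w p hp k σ hσ.
  apply: (@maxprinciple R 'I_N (fun k σ => Lf w (x k σ)) a b (Lf w (x p a)) ab) => //.
  - move=> k' τ hτ e e0.
    have τ0 : `[0, +oo[%classic τ.
      by rewrite /= in_itv /= andbT; move: hτ => /andP[h _]; lra.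
    have H1 := (subspace_continuousP _ _).1 (xcont k') τ τ0.
    have H2 := @continuous_cvg _ _ _ _ _ _ _ _ (Lf_cont w (x k' τ)) H1.
    have [δ δ0 H] := within_ed (H2 _) e e0.
    exists δ => // r hr hrt; apply: H => //.
    by rewrite /= in_itv /= andbT; move: hr => /andP[h _]; lra.
  - move=> k' τ hτ hmax.
    have hτ' : t (2 * n)%N < τ < t (2 * n).+1 by move: hτ; rewrite /a /b addn1.
    have hd := xder k' (2 * n)%N τ hτ'.
    exists (Lf w (rhs psi t x k' τ)).
      rewrite /rhs LfZ Lf_sum alpha1 //.
      apply: mulr_ge0_le0; first by rewrite invr_ge0.
      apply: sumr_le0 => m _; rewrite LfZ LfB mul1r.
      apply: mulr_ge0_le0; first exact/ltW.
      by have := hmax m; lra.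
    move=> e e0.
    have [δ δ0 H] := within_ed (@Lf_der R d w (x k') τ _ hd) e e0.
    exists δ => // h hn0 hh; apply: H => //; by rewrite subr0.
set v := x i s - x j u.
have [p hp] := argmax_ex i (fun m => Lf v (x m a)).
have [q hq] := argmax_ex i (fun m => Lf (- v) (x m a)).
have hi := key v p hp i s hs.
have hj := key (- v) q hq j u hu.
rewrite !LfN in hj.
set uu := x p a - x q a.
have h1 : enorm v ^+ 2 <= Lf v uu.
  by rewrite -Lf_self {1}/v /uu !LfB; lra.
have h2 := two_ineq v uu.
have h3 : enorm uu <= diam x a.
  rewrite /diam.
  apply: le_trans (le_bigmax _ _ p).
  exact: (le_bigmax _ (fun j => enorm (x p a - x j a)) q).
have := enorm_ge0 v; have := enorm_ge0 uu.
rewrite /= in h3. 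
nra.
Qed.
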